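(* Let $e=(B,T)$ be an edge with disjoint nonempty $T,B\subseteq[d]$, $m=|T|$, $r=|T|+|B|$, and let $\theta\in\mathbb{R}^d$ satisfy $|\theta_i|\le b$ for all $i$. Then $$\sum_{i\in T\cup B}\Big(\frac{\partial\log\mathbb{P}_\theta(e)}{\partial\theta_i}\Big)^2\ \le\ 2\,m\,e^{2b}\Big(\frac{r}{r-m}\Big)^2,$$ and $\partial\log\mathbb{P}_\theta(e)/\partial\theta_i=0$ for $i\notin T\cup B$.
   Context: PL model: items $[d]$, parameter $\theta\in\mathbb{R}^d$. For disjoint nonempty $T,B\subseteq[d]$, $\mathbb{P}_\theta(e)=\mathbb{P}_\theta(B\prec T)=\sum_{\sigma}\prod_{u=1}^{|T|}\frac{e^{\theta_{\sigma(u)}}}{\sum_{c=u}^{|T|}e^{\theta_{\sigma(c)}}+\sum_{i\in B}e^{\theta_i}}$, the sum over all orderings $\sigma=(\sigma(1),\dots,\sigma(|T|))$ of $T$; this is the PL probability that all items of $T$ are ranked above all items of $B$ when $T\cup B$ is offered. *)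

(* Defs.v *)
From Stdlib Require Import Reals Lra List.
Import ListNotations.
Open Scope R_scope.

Fixpoint inserts (x : nat) (l : list nat) : list (list nat) :=
  match l with
  | [] => [[x]]
  | y :: l' => (x :: y :: l') :: map (cons y) (inserts x l')
  end.

(* All orderings of a list (for a duplicate-free list: each permutation once). *)
Fixpoint perms (l : list nat) : list (list nat) :=
  match l with
  | [] => [[]]
  | x :: l' => flat_map (inserts x) (perms l')
  end.

Definition sum_exp (theta : nat -> R) (l : list nat) : R :=
  fold_right (fun i acc => exp (theta i) + acc) 0 l.

Fixpoint pl_term (theta : nat -> R) (SB : R) (sigma : list nat) : R :=
  match sigma with
  | [] => 1
  | s :: sigma' => exp (theta s) / (sum_exp theta (s :: sigma') + SB)
                   * pl_term theta SB sigma'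
  end.

(* P_theta(B < T): sum over all orderings sigma of T *)
Definition PL_prob (theta : nat -> R) (T B : list nat) : R :=
  fold_right (fun sigma acc => pl_term theta (sum_exp theta B) sigma + acc) 0
             (perms T).

Definition upd (theta : nat -> R) (i : nat) (t : R) : nat -> R :=
  fun j => if Nat.eqb j i then t else theta j.

Definition sum_list (f : nat -> R) (l : list nat) : R :=
  fold_right (fun i acc => f i + acc) 0 l.

(* Main.v *)
Require Import Defs.
From Stdlib Require Import Reals Lra List Permutation FunctionalExtensionality.
Import ListNotations.
Open Scope R_scope.

Definition lsum {A} (f : A -> R) (l : list A) : R :=
  fold_right (fun x acc => f x + acc) 0 l.

Lemma lsum_nil {A} (f : A -> R) : lsum f [] = 0. Proof. reflexivity. Qed.
Lemma lsum_cons {A} (f : A -> R) x l : lsum f (x :: l) = f x + lsum f l.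
Proof. reflexivity. Qed.
Lemma lsum_app {A} (f : A -> R) l1 l2 : lsum f (l1 ++ l2) = lsum f l1 + lsum f l2.
Proof. induction l1; simpl; [ring|]. unfold lsum in *; simpl; rewrite IHl1; ring. Qed.
Lemma lsum_le {A} (f h : A -> R) l : (forall x, In x l -> f x <= h x) -> lsum f l <= lsum h l.
Proof. induction l; intros H; rewrite ?lsum_nil, ?lsum_cons; [lra|].
  assert (f a <= h a) by (apply H; left; auto).
  assert (lsum f l <= lsum h l) by (apply IHl; intros; apply H; right; auto). lra. Qed.
Lemma lsum_ext {A} (f h : A -> R) l : (forall x, In x l -> f x = h x) -> lsum f l = lsum h l.
Proof. intros; apply Rle_antisym; apply lsum_le; intros; rewrite H; auto; lra. Qed.
Lemma lsum_scal {A} (f : A -> R) c l : lsum (fun x => c * f x) l = c * lsum f l.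
Proof. induction l; rewrite ?lsum_nil, ?lsum_cons; [ring|]. rewrite IHl; ring. Qed.
Lemma lsum_plus {A} (f h : A -> R) l : lsum (fun x => f x + h x) l = lsum f l + lsum h l.
Proof. induction l; rewrite ?lsum_nil, ?lsum_cons; [ring|]. rewrite IHl; ring. Qed.
Lemma lsum_minus {A} (f h : A -> R) l : lsum (fun x => f x - h x) l = lsum f l - lsum h l.
Proof. induction l; rewrite ?lsum_nil, ?lsum_cons; [ring|]. rewrite IHl; ring. Qed.
Lemma lsum_const {A} c (l : list A) : lsum (fun _ => c) l = INR (length l) * c.
Proof. induction l. rewrite lsum_nil; simpl; ring.
  rewrite lsum_cons, IHl. simpl length. rewrite S_INR; ring. Qed.
Lemma lsum_exch {A B} (F : A -> B -> R) l1 l2 :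
  lsum (fun x => lsum (fun y => F x y) l2) l1 = lsum (fun y => lsum (fun x => F x y) l1) l2.
Proof. induction l1; rewrite ?lsum_nil, ?lsum_cons.
  - induction l2; [reflexivity|]. unfold lsum in *; simpl in *. rewrite <- IHl2; ring.
  - rewrite IHl1, <- lsum_plus. apply lsum_ext; intros; rewrite lsum_cons; ring. Qed.
Lemma lsum_pos {A} (f : A -> R) l : (forall x, In x l -> 0 < f x) -> l <> [] -> 0 < lsum f l.
Proof. induction l; intros H Hn; [congruence|]. rewrite lsum_cons.
  assert (0 < f a) by (apply H; left; auto).
  destruct l. rewrite lsum_nil; lra.
  assert (0 < lsum f (a0 :: l)) by (apply IHl; [intros; apply H; right; auto| congruence]). lra. Qed.

Lemma deq f x l l' : derivable_pt_lim f x l -> l = l' -> derivable_pt_lim f x l'.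
Proof. intros; subst; auto. Qed.
Lemma dplus f g x a b : derivable_pt_lim f x a -> derivable_pt_lim g x b ->
  derivable_pt_lim (fun t => f t + g t) x (a + b).
Proof. intros; apply (derivable_pt_lim_plus f g); auto. Qed.
Lemma dmult f g x a b : derivable_pt_lim f x a -> derivable_pt_lim g x b ->
  derivable_pt_lim (fun t => f t * g t) x (a * g x + f x * b).
Proof. intros; apply (derivable_pt_lim_mult f g); auto. Qed.
Lemma ddiv f g x a b : derivable_pt_lim f x a -> derivable_pt_lim g x b -> g x <> 0 ->
  derivable_pt_lim (fun t => f t / g t) x ((a * g x - b * f x) / (g x)²).
Proof. intros; apply (derivable_pt_lim_div f g); auto. Qed.
Lemma dconst c x : derivable_pt_lim (fun _ => c) x 0.
Proof. apply (derivable_pt_lim_const c). Qed.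

Definition dsum (theta : nat -> R) (i : nat) (l : list nat) : R :=
  lsum (fun j => if Nat.eqb j i then exp (theta j) else 0) l.
Definition cnt (i : nat) (l : list nat) : R :=
  lsum (fun j => if Nat.eqb j i then 1 else 0) l.

Fixpoint G (theta : nat -> R) (B : list nat) (i : nat) (s : list nat) : R :=
  match s with
  | [] => 0
  | x :: s' => (if Nat.eqb x i then 1 else 0)
               - (dsum theta i (x :: s') + dsum theta i B) / (sum_exp theta (x :: s') + sum_exp theta B)
               + G theta B i s'
  end.

Lemma sum_exp_cons th x l : sum_exp th (x :: l) = exp (th x) + sum_exp th l.
Proof. reflexivity. Qed.
Lemma sum_exp_nn th l : 0 <= sum_exp th l.
Proof. induction l; [simpl; lra|]. rewrite sum_exp_cons. pose proof (exp_pos (th a)); lra. Qed.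
Lemma sum_exp_pos th l : l <> [] -> 0 < sum_exp th l.
Proof. destruct l; [congruence|]. intros; rewrite sum_exp_cons.
  pose proof (exp_pos (th n)); pose proof (sum_exp_nn th l); lra. Qed.
Lemma dsum_cons th i x l : dsum th i (x :: l) = (if Nat.eqb x i then exp (th x) else 0) + dsum th i l.
Proof. reflexivity. Qed.

Lemma d_exp_upd th i j t0 :
  derivable_pt_lim (fun t => exp (upd th i t j)) t0 (if Nat.eqb j i then exp (upd th i t0 j) else 0).
Proof. unfold upd. destruct (Nat.eqb j i). apply derivable_pt_lim_exp. apply dconst. Qed.

Lemma d_sum_exp th i l t0 :
  derivable_pt_lim (fun t => sum_exp (upd th i t) l) t0 (dsum (upd th i t0) i l).
Proof. induction l.
  - exact (dconst 0 t0).
  - rewrite dsum_cons. apply dplus; [apply d_exp_upd | apply IHl]. Qed.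

Lemma pl_pos th SB s : 0 <= SB -> 0 < pl_term th SB s.
Proof. intros HS; induction s; simpl; [lra|].
  pose proof (exp_pos (th a)); pose proof (sum_exp_nn th s).
  apply Rmult_lt_0_compat; auto. apply Rdiv_lt_0_compat; auto.
  rewrite <- sum_exp_cons. pose proof (sum_exp_pos th (a :: s)); assert (a::s <> []) by congruence. intuition lra. Qed.

Lemma d_pl th i B t0 s :
  derivable_pt_lim (fun t => pl_term (upd th i t) (sum_exp (upd th i t) B) s) t0
    (pl_term (upd th i t0) (sum_exp (upd th i t0) B) s * G (upd th i t0) B i s).
Proof. induction s.
  - simpl. eapply deq; [apply dconst| ring].
  - simpl pl_term. eapply deq.
    + apply dmult; [apply ddiv; [apply d_exp_upd | apply dplus; [exact (d_sum_exp th i (a::s) t0) | apply d_sum_exp]|] | apply IHs].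
      cbv beta. pose proof (exp_pos (upd th i t0 a)); pose proof (sum_exp_nn (upd th i t0) s);
      pose proof (sum_exp_nn (upd th i t0) B); lra.
    + set (th0 := upd th i t0).
      pose proof (sum_exp_pos th0 (a :: s)); pose proof (sum_exp_nn th0 B).
      assert (a :: s <> []) by congruence.
      assert (HD : sum_exp th0 (a :: s) + sum_exp th0 B <> 0) by (intuition lra).
      simpl G. cbv beta. change (upd th i t0) with th0.
      rewrite dsum_cons. rewrite sum_exp_cons in HD.
      destruct (Nat.eqb a i); unfold Rsqr; field; auto.
Qed.

Lemma d_lsum th i B t0 (L : list (list nat)) :
  derivable_pt_lim (fun t => lsum (fun s => pl_term (upd th i t) (sum_exp (upd th i t) B) s) L) t0
    (lsum (fun s => pl_term (upd th i t0) (sum_exp (upd th i t0) B) s * G (upd th i t0) B i s) L).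
Proof. induction L. exact (dconst 0 t0).
  rewrite lsum_cons. apply dplus; [apply d_pl | apply IHL]. Qed.

Lemma upd_same th i : upd th i (th i) = th.
Proof. apply functional_extensionality; intros j; unfold upd.
  destruct (Nat.eqb j i) eqn:E; auto. apply Nat.eqb_eq in E; subst; auto. Qed.

Lemma inserts_perm x l l' : In l' (inserts x l) -> Permutation (x :: l) l'.
Proof. revert l'; induction l; simpl; intros l' H.
  - destruct H as [H|[]]; subst; auto.
  - destruct H as [H|H]; [subst; auto|].
    apply in_map_iff in H. destruct H as [l'' [E H]]; subst.
    eapply perm_trans; [apply perm_swap|]. apply perm_skip; auto. Qed.

Lemma perms_perm l s : In s (perms l) -> Permutation l s.
Proof. revert s; induction l; simpl; intros s H.
  - destruct H as [H|[]]; subst; auto.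
  - apply in_flat_map in H. destruct H as [l' [H1 H2]].
    apply inserts_perm in H2. eapply perm_trans; [|apply H2]. apply perm_skip; auto. Qed.

Lemma inserts_ne x l : inserts x l <> [].
Proof. destruct l; simpl; congruence. Qed.
Lemma perms_ne l : perms l <> [].
Proof. induction l; simpl; [congruence|].
  destruct (perms l) as [|p ps]; [congruence|]. simpl.
  destruct (inserts a p) eqn:E; [exfalso; eapply inserts_ne; eauto| simpl; congruence]. Qed.

Lemma PL_pos th T B : 0 < PL_prob th T B.
Proof. change (0 < lsum (fun s => pl_term th (sum_exp th B) s) (perms T)).
  apply lsum_pos; [intros; apply pl_pos, sum_exp_nn | apply perms_ne]. Qed.

Definition Nn th T B i := lsum (fun s => pl_term th (sum_exp th B) s * G th B i s) (perms T).

Lemma d_main th T B i :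
  derivable_pt_lim (fun t => ln (PL_prob (upd th i t) T B)) (th i) (Nn th T B i / PL_prob th T B).
Proof.
  pose proof (d_lsum th i B (th i) (perms T)) as H. rewrite upd_same in H.
  pose proof (derivable_pt_lim_comp _ ln _ _ _ H (derivable_pt_lim_ln _ (PL_pos (upd th i (th i)) T B))) as H2.
  rewrite upd_same in H2. unfold comp in H2. unfold Rdiv. rewrite Rmult_comm. exact H2. Qed.

Lemma dsum_notin th i l : ~ In i l -> dsum th i l = 0.
Proof. induction l; intros H; [reflexivity|]. rewrite dsum_cons.
  destruct (Nat.eqb a i) eqn:E. apply Nat.eqb_eq in E; subst; exfalso; apply H; left; auto.
  rewrite IHl; [ring| intro; apply H; right; auto]. Qed.
Lemma dsum_in th i l : NoDup l -> In i l -> dsum th i l = exp (th i).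
Proof. induction l; intros Hn H; [destruct H|]. rewrite dsum_cons. inversion Hn; subst.
  destruct (Nat.eqb a i) eqn:E. apply Nat.eqb_eq in E; subst. rewrite dsum_notin; auto; ring.
  destruct H as [H|H]. subst; rewrite Nat.eqb_refl in E; discriminate. rewrite IHl; auto; ring. Qed.
Lemma cnt_cons i x l : cnt i (x :: l) = (if Nat.eqb x i then 1 else 0) + cnt i l.
Proof. reflexivity. Qed.
Lemma cnt_notin i l : ~ In i l -> cnt i l = 0.
Proof. induction l; intros H; [reflexivity|]. rewrite cnt_cons.
  destruct (Nat.eqb a i) eqn:E. apply Nat.eqb_eq in E; subst; exfalso; apply H; left; auto.
  rewrite IHl; [ring| intro; apply H; right; auto]. Qed.
Lemma cnt_in i l : NoDup l -> In i l -> cnt i l = 1.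
Proof. induction l; intros Hn H; [destruct H|]. rewrite cnt_cons. inversion Hn; subst.
  destruct (Nat.eqb a i) eqn:E. apply Nat.eqb_eq in E; subst. rewrite cnt_notin; auto; ring.
  destruct H as [H|H]. subst; rewrite Nat.eqb_refl in E; discriminate. rewrite IHl; auto; ring. Qed.
Lemma cnt_le1 i l : NoDup l -> cnt i l <= 1.
Proof. intros. destruct (in_dec Nat.eq_dec i l). rewrite cnt_in; auto; lra. rewrite cnt_notin; auto; lra. Qed.
Lemma dsum_nn th i l : 0 <= dsum th i l.
Proof. induction l; [unfold dsum; simpl; lra|]. rewrite dsum_cons.
  destruct (Nat.eqb a i); pose proof (exp_pos (th a)); lra. Qed.
Lemma dsum_le th i l : NoDup l -> dsum th i l <= exp (th i).
Proof. intros. destruct (in_dec Nat.eq_dec i l). rewrite dsum_in; auto; lra.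
  rewrite dsum_notin; auto; pose proof (exp_pos (th i)); lra. Qed.

Lemma cross th T L : NoDup T -> lsum (fun j => dsum th j L) T <= sum_exp th L.
Proof. intros HT. unfold dsum.
  rewrite (lsum_exch (fun j s => if Nat.eqb s j then exp (th s) else 0)).
  change (sum_exp th L) with (lsum (fun s => exp (th s)) L).
  apply lsum_le; intros s _.
  rewrite (lsum_ext _ (fun j => exp (th s) * (if Nat.eqb j s then 1 else 0))).
  rewrite lsum_scal. fold (cnt s T). pose proof (cnt_le1 s T HT). pose proof (exp_pos (th s)).
  pose proof (Rmult_le_compat_l (exp (th s)) _ _ (Rlt_le _ _ H0) H). lra.
  intros j _. rewrite Nat.eqb_sym. destruct (Nat.eqb j s); ring. Qed.

Lemma G_cons th B i x s : G th B i (x :: s) = (if Nat.eqb x i then 1 else 0)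
  - (dsum th i (x :: s) + dsum th i B) / (sum_exp th (x :: s) + sum_exp th B) + G th B i s.
Proof. reflexivity. Qed.

Lemma div_le_SB w D SB : 0 <= w -> 0 < SB -> SB <= D -> w / D <= w / SB.
Proof. intros. unfold Rdiv. apply Rmult_le_compat_l; auto. apply Rinv_le_contravar; auto. Qed.
Lemma div_nn w D : 0 <= w -> 0 < D -> 0 <= w / D.
Proof. intros. unfold Rdiv. apply Rmult_le_pos; auto. left; apply Rinv_0_lt_compat; auto. Qed.

Lemma GB th B i l : NoDup B -> In i B -> ~ In i l ->
  - (INR (length l) * exp (th i) / sum_exp th B) <= G th B i l <= 0.
Proof. intros HB HiB. assert (HS : 0 < sum_exp th B) by (apply sum_exp_pos; intro; subst; destruct HiB).
  pose proof (exp_pos (th i)).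
  induction l; intros Hl.
  - simpl. unfold Rdiv; rewrite Rmult_0_l, Rmult_0_l; lra.
  - rewrite G_cons. destruct (Nat.eqb a i) eqn:E.
    { apply Nat.eqb_eq in E; subst; exfalso; apply Hl; left; auto. }
    rewrite (dsum_notin th i (a :: l)), (dsum_in th i B); auto.
    assert (IH : - (INR (length l) * exp (th i) / sum_exp th B) <= G th B i l <= 0)
      by (apply IHl; intro; apply Hl; right; auto).
    pose proof (sum_exp_nn th (a :: l)).
    pose proof (div_le_SB (0 + exp (th i)) (sum_exp th (a :: l) + sum_exp th B) (sum_exp th B) ltac:(lra) HS ltac:(lra)).
    pose proof (div_nn (0 + exp (th i)) (sum_exp th (a :: l) + sum_exp th B) ltac:(lra) ltac:(lra)).
    simpl length. rewrite S_INR. unfold Rdiv in *. rewrite Rplus_0_l in *. nra.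
Qed.

Definition z th B i l := cnt i l - G th B i l.

Lemma z_cons th B i a l : ~ In i B ->
  z th B i (a :: l) = dsum th i (a :: l) / (sum_exp th (a :: l) + sum_exp th B) + z th B i l.
Proof. intros H. unfold z. rewrite G_cons. rewrite cnt_cons, (dsum_notin th i B H), Rplus_0_r. ring. Qed.

Lemma z_bound th B i l : B <> [] -> ~ In i B -> NoDup l ->
  0 <= z th B i l <= INR (length l) * exp (th i) / sum_exp th B.
Proof. intros HBn HiB. assert (HS : 0 < sum_exp th B) by (apply sum_exp_pos; auto).
  pose proof (exp_pos (th i)).
  induction l; intros Hl.
  - unfold z; simpl. unfold cnt, Rdiv; simpl. lra.
  - rewrite z_cons; auto. inversion Hl; subst.
    pose proof (IHl H3). pose proof (sum_exp_nn th (a :: l)).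
    pose proof (dsum_le th i (a :: l) Hl). pose proof (dsum_nn th i (a :: l)).
    pose proof (div_le_SB (dsum th i (a :: l)) (sum_exp th (a :: l) + sum_exp th B) (sum_exp th B) ltac:(lra) HS ltac:(lra)).
    pose proof (div_nn (dsum th i (a :: l)) (sum_exp th (a :: l) + sum_exp th B) ltac:(lra) ltac:(lra)).
    assert (dsum th i (a :: l) / sum_exp th B <= exp (th i) / sum_exp th B).
    { unfold Rdiv; apply Rmult_le_compat_r; auto. left; apply Rinv_0_lt_compat; auto. }
    simpl length. rewrite S_INR. unfold Rdiv in *. nra.
Qed.

Lemma z_sum th B T l : B <> [] -> NoDup T -> (forall j, In j T -> ~ In j B) ->
  lsum (fun j => z th B j l) T <= INR (length l).
Proof. intros HBn HT Hd. assert (HS : 0 < sum_exp th B) by (apply sum_exp_pos; auto).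
  induction l.
  - simpl. rewrite (lsum_ext _ (fun _ => 0)). rewrite lsum_const; lra.
    intros j _. unfold z, cnt; simpl. ring.
  - rewrite (lsum_ext _ (fun j => / (sum_exp th (a :: l) + sum_exp th B) * dsum th j (a :: l) + z th B j l)).
    2:{ intros j Hj. rewrite z_cons; auto. unfold Rdiv; ring. }
    rewrite lsum_plus, lsum_scal.
    pose proof (cross th T (a :: l) HT). pose proof (sum_exp_nn th (a :: l)).
    assert (/ (sum_exp th (a :: l) + sum_exp th B) * lsum (fun j => dsum th j (a :: l)) T <= 1).
    { apply Rle_trans with (/ (sum_exp th (a :: l) + sum_exp th B) * (sum_exp th (a :: l) + sum_exp th B)).
      apply Rmult_le_compat_l. left; apply Rinv_0_lt_compat; lra. lra.
      rewrite Rinv_l; lra. }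
    simpl length; rewrite S_INR. lra.
Qed.

Lemma wavg {A} (L : list A) p f lo hi : (forall s, In s L -> 0 < p s) ->
  (forall s, In s L -> lo <= f s <= hi) ->
  lo * lsum p L <= lsum (fun s => p s * f s) L <= hi * lsum p L.
Proof. intros Hp Hf. rewrite <- !lsum_scal. split; apply lsum_le; intros s Hs;
  specialize (Hp s Hs); specialize (Hf s Hs); nra. Qed.

Lemma G_zero th B i l : ~ In i l -> ~ In i B -> G th B i l = 0.
Proof. intros Hl HB; induction l; [reflexivity|]. rewrite G_cons.
  destruct (Nat.eqb a i) eqn:E. apply Nat.eqb_eq in E; subst; exfalso; apply Hl; left; auto.
  rewrite (dsum_notin th i (a :: l)), dsum_notin, IHl; auto. unfold Rdiv; ring.
  intro; apply Hl; right; auto. Qed.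

Lemma exp_mono x y : x <= y -> exp x <= exp y.
Proof. intros [H|H]; [left; apply exp_increasing; auto| subst; lra]. Qed.

Lemma sumB_lower th B eb : (forall i, In i B -> / eb <= exp (th i)) ->
  INR (length B) * / eb <= sum_exp th B.
Proof. intros H. change (sum_exp th B) with (lsum (fun i => exp (th i)) B).
  rewrite <- lsum_const. apply lsum_le; auto. Qed.

Lemma final_alg M K E X : 0 <= M -> 1 <= K -> 1 <= E -> 0 <= X -> X <= E / K ->
  M + 2 * M ^ 2 * X <= 2 * M * E * ((M + K) / K) ^ 2.
Proof. intros.
  set (u := M / K). assert (Hu : 0 <= u) by (unfold u, Rdiv; apply Rmult_le_pos; [lra| left; apply Rinv_0_lt_compat; lra]).
  assert (Hq : (M + K) / K = 1 + u) by (unfold u; field; lra).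
  assert (HM : M = u * K) by (unfold u; field; lra).
  clearbody u.
  assert (HX : X * K <= E).
  { apply Rle_trans with (E / K * K). apply Rmult_le_compat_r; lra. right; field; lra. }
  rewrite Hq.
  assert (M ^ 2 * X <= M * u * E).
  { rewrite HM. replace ((u*K)^2 * X) with (u * K * u * (X * K)) by ring.
    apply Rmult_le_compat_l; [|auto]. apply Rmult_le_pos; [|lra]. apply Rmult_le_pos; lra. }
  assert (0 <= M * u * E) by (apply Rmult_le_pos; [apply Rmult_le_pos|]; lra).
  assert (M <= M * E) by nra.
  assert (0 <= M * E * u * u) by (repeat apply Rmult_le_pos; lra).
  nra.
Qed.

Theorem mainTheorem9 (d : nat) (T B : list nat) (theta : nat -> R) (b : R)
  (hTnd : NoDup T) (hBnd : NoDup B)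
  (hTne : T <> []) (hBne : B <> [])
  (hdisj : forall i, In i T -> ~ In i B)
  (hTd : forall i, In i T -> (i < d)%nat)
  (hBd : forall i, In i B -> (i < d)%nat)
  (hb : forall i, (i < d)%nat -> Rabs (theta i) <= b) :
  exists g : nat -> R,
    (forall i, (i < d)%nat ->
       derivable_pt_lim (fun t => ln (PL_prob (upd theta i t) T B)) (theta i) (g i)) /\
    sum_list (fun i => (g i) ^ 2) (T ++ B)
      <= 2 * INR (length T) * exp (2 * b)
         * (INR (length T + length B) / (INR (length T + length B) - INR (length T))) ^ 2 /\
    (forall i, (i < d)%nat -> ~ In i T -> ~ In i B -> g i = 0).
Proof.
  pose proof (PL_pos theta T B) as HP.
  set (P := PL_prob theta T B) in *.
  assert (Hperm : forall s, In s (perms T) -> Permutation T s) by (intros; apply perms_perm; auto).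
  exists (fun i => Nn theta T B i / P).
  split; [intros; apply d_main|].
  split.
  2:{ intros i _ HiT HiB. unfold Nn. rewrite (lsum_ext _ (fun _ => 0)).
      rewrite lsum_const. unfold Rdiv; ring.
      intros s Hs. rewrite G_zero; [ring| |auto].
      intro H; apply HiT. apply (Permutation_in i (Permutation_sym (Hperm s Hs))); auto. }
  assert (Hb0 : 0 <= b).
  { destruct T as [|t T']; [congruence|]. pose proof (hb t (hTd t (or_introl eq_refl))).
    pose proof (Rabs_pos (theta t)); lra. }
  set (eb := exp b).
  assert (Heb : 1 <= eb) by (unfold eb; rewrite <- exp_0; apply exp_mono; auto).
  assert (Hw : forall i, (i < d)%nat -> / eb <= exp (theta i) <= eb).
  { intros i Hi. pose proof (hb i Hi). pose proof (Rle_abs (theta i)). pose proof (Rle_abs (- theta i)).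
    rewrite Rabs_Ropp in H1. unfold eb. rewrite <- exp_Ropp. split; apply exp_mono; lra. }
  set (SB := sum_exp theta B).
  set (m := length T). set (k := length B).
  assert (HSB : INR k * / eb <= SB) by (apply sumB_lower; intros; apply Hw; auto).
  assert (HSBp : 0 < SB) by (apply sum_exp_pos; auto).
  assert (HK : 1 <= INR k).
  { unfold k; destruct B as [|x0 B0]; [congruence|]. simpl length. rewrite S_INR. pose proof (pos_INR (length B0)); lra. }
  assert (HM : 0 <= INR m) by apply pos_INR.
  assert (Hlen : forall s, In s (perms T) -> length s = m) by (intros; symmetry; apply Permutation_length; auto).
  assert (Hnd : forall s, In s (perms T) -> NoDup s) by (intros s Hs; exact (Permutation_NoDup (Hperm s Hs) hTnd)).
  assert (Hpp : forall s, 0 < pl_term theta SB s) by (intros; apply pl_pos; unfold SB; apply sum_exp_nn).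
  assert (HBi : forall i, In i B -> (Nn theta T B i / P) ^ 2 <= (INR m * eb / SB) * (INR m / SB) * exp (theta i)).
  { intros i Hi. set (w := exp (theta i)).
    assert (Hwi : / eb <= w <= eb) by (apply Hw; auto).
    assert (Hwp : 0 < w) by apply exp_pos.
    pose proof (wavg (perms T) (pl_term theta SB) (G theta B i) (- (INR m * w / SB)) 0
      ltac:(intros; apply Hpp)
      ltac:(intros s Hs; rewrite <- (Hlen s Hs); apply GB; auto;
            intro H; apply (hdisj i); [apply (Permutation_in i (Permutation_sym (Hperm s Hs))); auto|auto])) as [H1 H2].
    fold SB in H1, H2. change (lsum (pl_term theta SB) (perms T)) with P in H1, H2.
    change (lsum (fun s => pl_term theta SB s * G theta B i s) (perms T)) with (Nn theta T B i) in H1, H2.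
    set (x := Nn theta T B i / P).
    assert (Hx : Nn theta T B i = x * P) by (unfold x; field; lra).
    rewrite Hx in H1, H2.
    assert (x <= 0) by (apply Rmult_le_reg_r with P; auto; lra).
    assert (- (INR m * w / SB) <= x) by (apply Rmult_le_reg_r with P; auto; lra).
    assert (0 <= INR m * w / SB) by (apply div_nn; [apply Rmult_le_pos|]; lra).
    assert (INR m * w / SB <= INR m * eb / SB).
    { unfold Rdiv. apply Rmult_le_compat_r; [left; apply Rinv_0_lt_compat; auto|]. apply Rmult_le_compat_l; lra. }
    replace (INR m * eb / SB * (INR m / SB) * w) with ((INR m * eb / SB) * (INR m * w / SB)) by (field; lra).
    nra. }
  assert (HBsum : lsum (fun i => (Nn theta T B i / P) ^ 2) B <= INR m ^ 2 * (eb / SB)).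
  { eapply Rle_trans. apply lsum_le. apply HBi. rewrite lsum_scal.
    change (lsum (fun i => exp (theta i)) B) with SB. right; field; lra. }
  set (Y := fun i => lsum (fun s => pl_term theta SB s * z theta B i s) (perms T) / P).
  assert (HY : forall i, In i T -> Nn theta T B i / P = 1 - Y i).
  { intros i Hi. unfold Nn, Y. fold SB.
    rewrite (lsum_ext _ (fun s => pl_term theta SB s - pl_term theta SB s * z theta B i s)).
    rewrite lsum_minus. change (lsum (pl_term theta SB) (perms T)) with P. field; lra.
    intros s Hs. unfold z. rewrite cnt_in; [ring| auto|]. apply (Permutation_in i (Hperm s Hs)); auto. }
  assert (HYb : forall i, In i T -> 0 <= Y i <= INR m * eb / SB).
  { intros i Hi. set (w := exp (theta i)).
    assert (Hwi : / eb <= w <= eb) by (apply Hw; auto).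
    pose proof (wavg (perms T) (pl_term theta SB) (z theta B i) 0 (INR m * w / SB)
      ltac:(intros; apply Hpp)
      ltac:(intros s Hs; rewrite <- (Hlen s Hs); apply z_bound; auto)) as [H1 H2].
    change (lsum (pl_term theta SB) (perms T)) with P in H1, H2.
    assert (INR m * w / SB <= INR m * eb / SB).
    { unfold Rdiv. apply Rmult_le_compat_r; [left; apply Rinv_0_lt_compat; auto|]. apply Rmult_le_compat_l; lra. }
    unfold Y. set (Q := lsum (fun s => pl_term theta SB s * z theta B i s) (perms T)) in *.
    assert (0 <= Q / P) by (apply div_nn; lra).
    assert (Q / P <= INR m * w / SB).
    { apply Rmult_le_reg_r with P; auto. unfold Rdiv at 1. rewrite Rmult_assoc, Rinv_l; lra. }
    lra. }
  assert (HYs : lsum Y T <= INR m).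
  { unfold Y. unfold Rdiv. rewrite (lsum_ext _ (fun i => / P * lsum (fun s => pl_term theta SB s * z theta B i s) (perms T)))
      by (intros; ring).
    rewrite lsum_scal.
    rewrite (lsum_exch (fun i s => pl_term theta SB s * z theta B i s)).
    apply Rle_trans with (/ P * lsum (fun s => pl_term theta SB s * INR m) (perms T)).
    - apply Rmult_le_compat_l; [left; apply Rinv_0_lt_compat; auto|].
      apply lsum_le; intros s Hs. rewrite lsum_scal. apply Rmult_le_compat_l; [left; auto|].
      rewrite <- (Hlen s Hs). apply z_sum; auto.
    - rewrite (lsum_ext _ (fun s => INR m * pl_term theta SB s)) by (intros; ring).
      rewrite lsum_scal. change (lsum (pl_term theta SB) (perms T)) with P.
      right; field; lra. }
  assert (HTsum : lsum (fun i => (Nn theta T B i / P) ^ 2) T <= INR m + INR m ^ 2 * (eb / SB)).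
  { apply Rle_trans with (lsum (fun i => 1 + (INR m * eb / SB) * Y i) T).
    - apply lsum_le; intros i Hi. rewrite HY; auto. pose proof (HYb i Hi). nra.
    - rewrite lsum_plus, lsum_scal, lsum_const.
      assert (0 <= INR m * eb / SB) by (apply div_nn; [apply Rmult_le_pos|]; lra).
      pose proof (Rmult_le_compat_l _ _ _ H HYs). fold m.
      replace (INR m ^ 2 * (eb / SB)) with (INR m * eb / SB * INR m) by (field; lra). lra. }
  change (sum_list (fun i => (Nn theta T B i / P) ^ 2) (T ++ B))
    with (lsum (fun i => (Nn theta T B i / P) ^ 2) (T ++ B)).
  rewrite lsum_app.
  fold m k. rewrite plus_INR. replace (INR m + INR k - INR m) with (INR k) by ring.
  replace (2 * b) with (b + b) by ring. rewrite exp_plus. fold eb.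
  assert (HX : eb / SB <= eb * eb / INR k).
  { apply Rle_trans with (eb / (INR k * / eb)).
    apply div_le_SB; auto. lra. apply Rmult_lt_0_compat; [lra| apply Rinv_0_lt_compat; lra].
    right; field; lra. }
  pose proof (final_alg (INR m) (INR k) (eb * eb) (eb / SB) HM HK ltac:(nra)
     ltac:(apply div_nn; lra) HX).
  lra.
Qed.
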